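(* Let $(G,c)$ be a $k$-terminal network whose minimum $S$-separating cuts are unique for all $S\subset Q$, $S\neq\emptyset,Q$, so that $\Delta_{G,c}>0$. Let $A_G=A_{G,c}\in\{0,1\}^{m\times E(G)}$ be its cutset-edge incidence matrix, let $r=\mathrm{rank}(A_G)\ge1$, and fix any matrix $A\in\{0,1\}^{m\times(r-1)}$ with column span $W_A\subseteq\mathbb{R}^m$. Let $w\in\mathbb{R}^{E(G)}$ be random with independent coordinates $w(e)$, each uniformly distributed on $[0,\frac{1}{\Delta_{G,c}|E(G)|}]$, and let $\vec c\in\mathbb{R}^{E(G)}$ be the vector of costs $c$. Then $$\Pr_w\big[A_G(\vec c+\vec w)\in W_A\big]=0.$$
   Context: For $S\subset Q$, $\bar S=Q\setminus S$; a cut $(W,V(G)\setminus W)$ is $S$-separating if $W\cap Q\in\{S,\bar S\}$; its cost is the total cost of its cutset (edges with exactly one endpoint in $W$). $\Delta_{G,c}(S)\ge0$ is the difference between the two smallest costs among all $S$-separating cuts, and $\Delta_{G,c}=\min_S\Delta_{G,c}(S)$. Cutset-edge incidence matrix: fix an enumeration $S_1,\dots,S_m$, $m=2^{k-1}-1$, of representatives of the distinct nontrivial bipartitions $Q=S_i\cup\bar S_i$, and for each $i$ a minimum-cost $S_i$-separating cut; $(A_{G,c})_{i,e}=1$ iff $e$ lies in that cut's cutset, else $0$. *)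

(* Defs.v *)
From Stdlib Require Import Reals List Arith.
Import ListNotations.
Open Scope R_scope.

Definition rsum (n : nat) (f : nat -> R) : R :=
  fold_right Rplus 0 (map f (seq 0 n)).
Definition rprod (n : nat) (f : nat -> R) : R :=
  fold_right Rmult 1 (map f (seq 0 n)).

(* A k-terminal network: vertices 0..n-1, edges indexed 0..E-1 given by
   the list [edges] of endpoint pairs, costs c : nat -> R (c j = cost of
   edge j), terminal list Q (duplicate free; k = length Q). *)
Definition wf_network (n : nat) (edges : list (nat * nat)) (c : nat -> R)
  (Q : list nat) : Prop :=
  (forall e, In e edges -> (fst e < n)%nat /\ (snd e < n)%nat /\ fst e <> snd e) /\
  (forall j, (j < length edges)%nat -> 0 <= c j) /\
  NoDup Q /\ (forall q, In q Q -> (q < n)%nat).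

(* a subset S of Q (given by a predicate on vertices, only its values on Q
   matter) is nontrivial iff S <> emptyset, S <> Q *)
Definition nontrivial (Q : list nat) (S : nat -> bool) : Prop :=
  (exists q, In q Q /\ S q = true) /\ (exists q, In q Q /\ S q = false).

(* a cut is given by one side W : nat -> bool (only values on 0..n-1 matter);
   it is S-separating if W ∩ Q ∈ {S, Q \ S} *)
Definition separating (Q : list nat) (S W : nat -> bool) : Prop :=
  (forall q, In q Q -> W q = S q) \/ (forall q, In q Q -> W q = negb (S q)).

Definition in_cutset (edges : list (nat * nat)) (W : nat -> bool) (j : nat) : bool :=
  let e := nth j edges (0%nat, 0%nat) in xorb (W (fst e)) (W (snd e)).

Definition cut_cost (edges : list (nat * nat)) (c : nat -> R) (W : nat -> bool) : R :=
  rsum (length edges) (fun j => if in_cutset edges W j then c j else 0).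

(* (W, V\W) and (W', V\W') are the same cut (cuts are unordered bipartitions) *)
Definition same_cut (n : nat) (W W' : nat -> bool) : Prop :=
  (forall v, (v < n)%nat -> W' v = W v) \/ (forall v, (v < n)%nat -> W' v = negb (W v)).

Definition min_sep_cut edges c Q (S W : nat -> bool) : Prop :=
  separating Q S W /\
  forall W', separating Q S W' -> cut_cost edges c W <= cut_cost edges c W'.

Definition unique_min_cuts n edges c Q : Prop :=
  forall S, nontrivial Q S -> forall W W',
    min_sep_cut edges c Q S W -> min_sep_cut edges c Q S W' -> same_cut n W W'.

(* Delta_{G,c}(S) = d : difference between the two smallest costs among all
   (distinct) S-separating cuts. *)
Definition DeltaS n edges c Q (S : nat -> bool) (d : R) : Prop :=
  exists W0 W1,
    min_sep_cut edges c Q S W0 /\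
    separating Q S W1 /\ ~ same_cut n W0 W1 /\
    (forall W, separating Q S W -> ~ same_cut n W0 W ->
       cut_cost edges c W1 <= cut_cost edges c W) /\
    d = cut_cost edges c W1 - cut_cost edges c W0.

Definition DeltaG n edges c Q (d : R) : Prop :=
  (exists S, nontrivial Q S /\ DeltaS n edges c Q S d) /\
  (forall S d', nontrivial Q S -> DeltaS n edges c Q S d' -> d <= d').

(* S_0,...,S_{m-1} (m = 2^(k-1)-1) are representatives of the distinct
   nontrivial bipartitions of Q *)
Definition bipartition_enum (Q : list nat) (m : nat) (Sn : nat -> nat -> bool) : Prop :=
  m = (2 ^ (length Q - 1) - 1)%nat /\
  (forall i, (i < m)%nat -> nontrivial Q (Sn i)) /\
  (forall i j, (i < j < m)%nat ->
     ~ (forall q, In q Q -> Sn j q = Sn i q) /\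
     ~ (forall q, In q Q -> Sn j q = negb (Sn i q))).

Definition cutset_matrix edges c Q m (Sn : nat -> nat -> bool)
  (AG : nat -> nat -> R) : Prop :=
  forall i, (i < m)%nat -> exists W, min_sep_cut edges c Q (Sn i) W /\
    forall j, (j < length edges)%nat ->
      AG i j = if in_cutset edges W j then 1 else 0.

Definition lin_indep_cols (m N : nat) (M : nat -> nat -> R) (js : list nat) : Prop :=
  NoDup js /\ (forall j, In j js -> (j < N)%nat) /\
  forall a : nat -> R,
    (forall i, (i < m)%nat -> fold_right Rplus 0 (map (fun j => a j * M i j) js) = 0) ->
    forall j, In j js -> a j = 0.

Definition real_rank (m N : nat) (M : nat -> nat -> R) (r : nat) : Prop :=
  (exists js, lin_indep_cols m N M js /\ length js = r) /\
  (forall js, lin_indep_cols m N M js -> (length js <= r)%nat).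

Definition in_col_span (m p : nat) (A : nat -> nat -> R) (v : nat -> R) : Prop :=
  exists x : nat -> R, forall i, (i < m)%nat -> rsum p (fun j => A i j * x j) = v i.

(* Lebesgue-null subset of R^N (coordinates 0..N-1 of w : nat -> R):
   for every eps > 0 it is covered by countably many boxes of total volume
   <= eps. *)
Definition lebesgue_null (N : nat) (P : (nat -> R) -> Prop) : Prop :=
  forall eps, 0 < eps ->
    exists lo hi : nat -> nat -> R,
      (forall k j, lo k j <= hi k j) /\
      (forall w, P w -> exists k, forall j, (j < N)%nat -> lo k j <= w j <= hi k j) /\
      (forall K, rsum K (fun k => rprod N (fun j => hi k j - lo k j)) <= eps).

(* Pr_w[event] = 0 for w uniform on the box [0,b]^N with b > 0
   (independent uniform coordinates), i.e. the event inside the box is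
   Lebesgue-null. *)
Definition prob_zero_uniform_box (N : nat) (b : R) (event : (nat -> R) -> Prop) : Prop :=
  lebesgue_null N (fun w => (forall j, (j < N)%nat -> 0 <= w j <= b) /\ event w).

(* Main.v *)
Require Import Defs.
From Stdlib Require Import Reals List Arith Lia Lra.
Import ListNotations.
Open Scope R_scope.


Lemma rsum_S n f : rsum (S n) f = rsum n f + f n.
Proof.
  unfold rsum. rewrite seq_S, map_app, fold_right_app. simpl.
  generalize (map f (seq 0 n)). intro l. induction l; simpl; lra.
Qed.

Lemma rprod_S n f : rprod (S n) f = rprod n f * f n.
Proof.
  unfold rprod. rewrite seq_S, map_app, fold_right_app. simpl.
  generalize (map f (seq 0 n)). intro l. induction l; simpl; try lra.
  rewrite IHl. ring.
Qed.

Lemma rsum_0 f : rsum 0 f = 0. Proof. reflexivity. Qed.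
Lemma rprod_0 f : rprod 0 f = 1. Proof. reflexivity. Qed.

Lemma rsum_ext n f g : (forall j, (j < n)%nat -> f j = g j) -> rsum n f = rsum n g.
Proof.
  induction n; intros H; [reflexivity|]. rewrite !rsum_S, IHn, H; auto; intros; apply H; lia.
Qed.

Lemma rprod_ext n f g : (forall j, (j < n)%nat -> f j = g j) -> rprod n f = rprod n g.
Proof.
  induction n; intros H; [reflexivity|]. rewrite !rprod_S, IHn, H; auto; intros; apply H; lia.
Qed.

Lemma rsum_plus n f g : rsum n (fun j => f j + g j) = rsum n f + rsum n g.
Proof. induction n; [simpl; unfold rsum; simpl; lra|]. rewrite !rsum_S, IHn. ring. Qed.

Lemma rsum_scal n k f : rsum n (fun j => k * f j) = k * rsum n f.
Proof. induction n; [unfold rsum; simpl; lra|]. rewrite !rsum_S, IHn. ring. Qed.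

Lemma rsum_opp n f : rsum n (fun j => - f j) = - rsum n f.
Proof. induction n; [unfold rsum; simpl; lra|]. rewrite !rsum_S, IHn. ring. Qed.

Lemma rsum_zero n f : (forall j, (j < n)%nat -> f j = 0) -> rsum n f = 0.
Proof. intros H. rewrite (rsum_ext n f (fun _ => 0 * 0)). rewrite rsum_scal. ring.
  intros; rewrite H; auto; ring. Qed.

Lemma rsum_le n f g : (forall j, (j < n)%nat -> f j <= g j) -> rsum n f <= rsum n g.
Proof. induction n; intros H; [unfold rsum; simpl; lra|]. rewrite !rsum_S.
  assert (f n <= g n) by (apply H; lia). assert (rsum n f <= rsum n g) by (apply IHn; intros; apply H; lia). lra. Qed.

Lemma rsum_abs n f : Rabs (rsum n f) <= rsum n (fun j => Rabs (f j)).
Proof. induction n; [unfold rsum; simpl; rewrite Rabs_R0; lra|]. rewrite !rsum_S.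
  eapply Rle_trans; [apply Rabs_triang|]. lra. Qed.

Lemma rsum_swap m n (y : nat -> R) (f : nat -> nat -> R) :
  rsum m (fun i => y i * rsum n (fun j => f i j)) =
  rsum n (fun j => rsum m (fun i => y i * f i j)).
Proof.
  induction m.
  - unfold rsum at 1; simpl. symmetry; apply rsum_zero; intros; reflexivity.
  - rewrite rsum_S, IHm. rewrite <- rsum_scal, <- rsum_plus.
    apply rsum_ext; intros; rewrite rsum_S; reflexivity.
Qed.

Lemma rsum_split n j0 f : (j0 < n)%nat ->
  rsum n f = rsum n (fun j => if Nat.eqb j j0 then 0 else f j) + f j0.
Proof.
  induction n; intros H; [lia|]. rewrite !rsum_S.
  destruct (Nat.eq_dec j0 n).
  - subst. rewrite Nat.eqb_refl.
    rewrite (rsum_ext n (fun j => if Nat.eqb j n then 0 else f j) f). lra.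
    intros j Hj. destruct (Nat.eqb_spec j n); [lia|reflexivity].
  - rewrite IHn by lia. destruct (Nat.eqb_spec n j0); [lia|]. lra.
Qed.

Lemma rsum_ind_le K T V : 0 <= V -> rsum K (fun k => if Nat.ltb k T then V else 0) <= INR T * V.
Proof.
  intros HV. assert (forall K, rsum K (fun k => if Nat.ltb k T then V else 0) = INR (Nat.min K T) * V).
  { induction K0; [unfold rsum; simpl; lra|]. rewrite rsum_S, IHK0.
    destruct (Nat.ltb_spec K0 T).
    - replace (Nat.min (S K0) T) with (S (Nat.min K0 T)) by lia. rewrite S_INR. lra.
    - replace (Nat.min (S K0) T) with (Nat.min K0 T) by lia. lra. }
  rewrite H. apply Rmult_le_compat_r; auto. apply le_INR. lia.
Qed.

Lemma rprod_special N j0 h dl : (j0 < N)%nat ->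
  rprod N (fun j => if Nat.eqb j j0 then h else dl) = dl ^ (N - 1) * h.
Proof.
  induction N; intros H; [lia|]. rewrite rprod_S.
  destruct (Nat.eq_dec j0 N).
  - subst. rewrite Nat.eqb_refl.
    rewrite (rprod_ext N _ (fun _ => dl)).
    + replace (S N - 1)%nat with N by lia. f_equal.
      clear. induction N; [reflexivity|]. rewrite rprod_S, IHN. simpl. ring.
    + intros j Hj. destruct (Nat.eqb_spec j N); [lia|reflexivity].
  - rewrite IHN by lia. destruct (Nat.eqb_spec N j0); [lia|].
    replace (S N - 1)%nat with (S (N - 1)) by lia. simpl. ring.
Qed.

Lemma rprod_zero N : (0 < N)%nat -> rprod N (fun _ => 0) = 0.
Proof. intros H. destruct N; [lia|]. rewrite rprod_S. ring. Qed.

Lemma rsum_S_l n f : rsum (S n) f = f 0%nat + rsum n (fun k => f (S k)).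
Proof. induction n. { unfold rsum; simpl; ring. } rewrite rsum_S, IHn, rsum_S. ring. Qed.

Lemma fold_map_rsum (g : nat -> R) js :
  fold_right Rplus 0 (map g js) = rsum (length js) (fun k => g (List.nth k js 0%nat)).
Proof. induction js; [reflexivity|]. simpl. rewrite rsum_S_l, IHjs. reflexivity. Qed.


Fixpoint tup (l : list nat) : list (list nat) :=
  match l with
  | [] => [[]]
  | r :: l' => flat_map (fun i => map (cons i) (tup l')) (seq 0 r)
  end.

Lemma length_fm (X : list (list nat)) s :
  length (flat_map (fun i => map (cons i) X) s) = (length s * length X)%nat.
Proof. induction s; simpl; auto. rewrite length_app, length_map, IHs. lia. Qed.

Lemma length_tup l : length (tup l) = fold_right mult 1%nat l.
Proof. induction l; simpl; auto. rewrite length_fm, length_seq, IHl. lia. Qed.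

Lemma tup_in l t : length t = length l ->
  (forall i, (i < length l)%nat -> (nth i t 0%nat < nth i l 0%nat)%nat) -> In t (tup l).
Proof.
  revert t; induction l as [|x l IH]; intros t Hl H.
  - destruct t; simpl in *; [auto|lia].
  - destruct t as [|y t]; simpl in *; [lia|].
    apply in_flat_map. exists y. split.
    + apply in_seq. specialize (H 0%nat). simpl in H. lia.
    + apply in_map. apply IH; [lia|]. intros i Hi. apply (H (S i)). lia.
Qed.

Lemma choose_list n (bnd : nat -> nat) (P : nat -> nat -> Prop) :
  (forall j, (j < n)%nat -> exists t, (t < bnd j)%nat /\ P j t) ->
  exists tl, length tl = n /\ forall j, (j < n)%nat -> (nth j tl 0%nat < bnd j)%nat /\ P j (nth j tl 0%nat).
Proof.
  induction n; intros H.
  - exists []. split; auto. intros; lia.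
  - destruct IHn as [tl [Hl Ht]]. { intros; apply H; lia. }
    destruct (H n) as [t Ht2]; [lia|].
    exists (tl ++ [t]). split. { rewrite length_app; simpl; lia. }
    intros j Hj. destruct (Nat.eq_dec j n).
    + subst. rewrite app_nth2 by lia. rewrite Nat.sub_diag. simpl. auto.
    + rewrite app_nth1 by lia. apply Ht. lia.
Qed.

Lemma cell_exists M x dl : (1 <= M)%nat -> 0 < dl -> 0 <= x <= INR M * dl ->
  exists t, (t < M)%nat /\ INR t * dl <= x <= INR t * dl + dl.
Proof.
  induction M; intros HM Hd Hx; [lia|].
  destruct (Nat.eq_dec M 0).
  - subst. exists 0%nat. simpl in *. split; [lia|]. lra.
  - destruct (Rle_dec x (INR M * dl)).
    + destruct IHM as [t [Ht1 Ht2]]; auto; try lia; try lra.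
      exists t; split; auto; lia.
    + exists M. rewrite S_INR in Hx. split; [lia|]. lra.
Qed.


Lemma prod_app l x : fold_right mult 1%nat (l ++ [x]) = (fold_right mult 1%nat l * x)%nat.
Proof. induction l; simpl; lia. Qed.

Lemma prod_bnd N j0 M :
  fold_right mult 1%nat (map (fun j => if Nat.eqb j j0 then 1%nat else M) (seq 0 N)) =
  (if Nat.ltb j0 N then M ^ (N - 1) else M ^ N)%nat.
Proof.
  induction N; [reflexivity|]. rewrite seq_S, map_app. cbn [map]. rewrite prod_app, IHN. simpl.
  destruct (Nat.eqb_spec N j0); destruct (Nat.ltb_spec j0 N); destruct (Nat.ltb_spec j0 (S N)); try lia;
  rewrite Nat.sub_0_r.
  - ring.
  - destruct N; [lia|]. simpl. rewrite Nat.sub_0_r. ring.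
Qed.

Lemma hyperplane_null N b (P : (nat -> R) -> Prop) j0 (a : nat -> R) s :
  (j0 < N)%nat -> a j0 = 0 ->
  (forall w, (forall j, (j < N)%nat -> 0 <= w j <= b) -> P w ->
     w j0 = s - rsum N (fun j => a j * w j)) ->
  lebesgue_null N (fun w => (forall j, (j < N)%nat -> 0 <= w j <= b) /\ P w).
Proof.
  intros Hj0 Ha0 Hw eps Heps.
  destruct (Rlt_dec b 0) as [Hb|Hb].
  { exists (fun _ _ => 0), (fun _ _ => 0). split; [intros; lra|]. split.
    - intros w [Hbox _]. specialize (Hbox j0 Hj0). lra.
    - intros K. rewrite rsum_zero; [lra|]. intros k _.
      rewrite (rprod_ext N _ (fun _ => 0)) by (intros; ring). apply rprod_zero. lia. }
  set (B := b + 1).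
  assert (HB : 0 < B) by (unfold B; lra).
  set (L := rsum N (fun j => Rabs (a j))).
  assert (HL : 0 <= L).
  { unfold L. rewrite <- (rsum_zero N (fun _ => 0)) by auto. apply rsum_le. intros; apply Rabs_pos. }
  destruct (INR_archimed 1 (2 * L * B ^ N / eps)) as [n0 Hn0]; [lra|].
  set (M := S n0).
  assert (HM : INR M > 2 * L * B ^ N / eps) by (unfold M; rewrite S_INR; lra).
  assert (HM0 : 0 < INR M) by (unfold M; apply lt_0_INR; lia).
  set (dl := B / INR M).
  assert (Hdl : 0 < dl) by (unfold dl; apply Rdiv_lt_0_compat; lra).
  assert (HMd : INR M * dl = B) by (unfold dl; field; lra).
  set (bnd := fun j => if Nat.eqb j j0 then 1%nat else M).
  set (T := tup (map bnd (seq 0 N))).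
  set (tj := fun k j => INR (nth j (nth k T []) 0%nat) * dl).
  set (ctr := fun k => s - rsum N (fun j => a j * tj k j)).
  exists (fun k j => if Nat.ltb k (length T) then (if Nat.eqb j j0 then ctr k - L * dl else tj k j) else 0).
  exists (fun k j => if Nat.ltb k (length T) then (if Nat.eqb j j0 then ctr k + L * dl else tj k j + dl) else 0).
  split; [|split].
  - intros k j. destruct (Nat.ltb k (length T)); [|lra].
    destruct (Nat.eqb j j0); nra.
  - intros w [Hbox HP].
    pose proof (Hw w Hbox HP) as Hwj0.
    destruct (choose_list N bnd (fun j t => j = j0 \/ (INR t * dl <= w j <= INR t * dl + dl)))
      as [tl [Htl1 Htl2]].
    { intros j Hj. unfold bnd. destruct (Nat.eqb_spec j j0).
      - exists 0%nat. split; [lia|left; auto].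
      - destruct (cell_exists M (w j) dl) as [t [Ht1 Ht2]]; [unfold M; lia|auto| |].
        + rewrite HMd. specialize (Hbox j Hj). unfold B. lra.
        + exists t. split; auto. }
    assert (Hin : In tl T).
    { unfold T. apply tup_in.
      - rewrite length_map, length_seq. auto.
      - intros i Hi. rewrite length_map, length_seq in Hi.
        rewrite (nth_indep (map bnd (seq 0 N)) _ (bnd 0%nat)) by (rewrite length_map, length_seq; auto).
        rewrite map_nth, seq_nth by auto. simpl. apply Htl2; auto. }
    destruct (In_nth T tl [] Hin) as [k [Hk1 Hk2]].
    exists k. intros j Hj.
    assert (Hkb : Nat.ltb k (length T) = true) by (apply Nat.ltb_lt; auto).
    rewrite Hkb.
    destruct (Nat.eqb_spec j j0).
    + subst j.
      assert (Habs : Rabs (w j0 - ctr k) <= L * dl).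
      { unfold ctr. rewrite Hwj0.
        replace (s - rsum N (fun j => a j * w j) - (s - rsum N (fun j => a j * tj k j)))
          with (rsum N (fun j => a j * (tj k j - w j))).
        2:{ rewrite (rsum_ext N (fun j => a j * (tj k j - w j))
                      (fun j => a j * tj k j + (- (a j * w j)))) by (intros; ring).
            rewrite rsum_plus, rsum_opp. ring. }
        eapply Rle_trans; [apply rsum_abs|].
        unfold L. rewrite Rmult_comm, <- rsum_scal. apply rsum_le. intros j Hj'.
        rewrite Rabs_mult, (Rmult_comm dl).
        destruct (Nat.eq_dec j j0).
        - subst j. rewrite Ha0, Rabs_R0. lra.
        - apply Rmult_le_compat_l; [apply Rabs_pos|]. destruct (Htl2 j Hj') as [_ [Hc|Hc]]; [lia|].
          unfold tj. rewrite Hk2. apply Rabs_le. lra. }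
      unfold Rabs in Habs; destruct (Rcase_abs (w j0 - ctr k)); lra.
    + destruct (Htl2 j Hj) as [_ [Hc|Hc]]; [lia|].
      unfold tj. rewrite Hk2. lra.
  - intros K.
    rewrite (rsum_ext K _ (fun k => if Nat.ltb k (length T) then dl ^ (N - 1) * (2 * L * dl) else 0)).
    + eapply Rle_trans; [apply rsum_ind_le; apply Rmult_le_pos; [apply pow_le; lra|nra]|].
      unfold T. rewrite length_tup. unfold bnd. rewrite prod_bnd.
      destruct (Nat.ltb_spec j0 N); [|lia].
      rewrite pow_INR.
      replace (INR M ^ (N - 1) * (dl ^ (N - 1) * (2 * L * dl)))
        with ((INR M * dl) ^ (N - 1) * (2 * L * dl)) by (rewrite Rpow_mult_distr; ring).
      rewrite HMd. unfold dl.
      replace (B ^ (N - 1) * (2 * L * (B / INR M))) with (2 * L * B ^ N / INR M).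
      2:{ replace N with (S (N - 1)) at 1 by lia. rewrite <- tech_pow_Rmult. field. lra. }
      apply (Rmult_le_reg_r (INR M)); auto.
      replace (2 * L * B ^ N / INR M * INR M) with (2 * L * B ^ N) by (field; lra).
      apply Rlt_le. apply (Rmult_lt_reg_r (/ eps)). apply Rinv_0_lt_compat; auto.
      replace (eps * INR M * / eps) with (INR M) by (field; lra). unfold Rdiv in HM. lra.
    + intros k _. destruct (Nat.ltb k (length T)).
      * rewrite (rprod_ext N _ (fun j => if Nat.eqb j j0 then 2 * L * dl else dl)).
        -- apply rprod_special; auto.
        -- intros j _. destruct (Nat.eqb j j0); ring.
      * rewrite (rprod_ext N _ (fun _ => 0)) by (intros; ring). apply rprod_zero. lia.
Qed.


Module LA.
From mathcomp Require Import all_boot all_algebra.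
From mathcomp Require Import Rstruct zify.
Import GRing.Theory.
Local Open Scope ring_scope.

Lemma rsum_big n (f : nat -> R) : rsum n f = \sum_(i < n) f i.
Proof. elim: n => [|n IH]; first by rewrite big_ord0. by rewrite rsum_S big_ord_recr /= IH. Qed.

Lemma key (m N : nat) (AG : nat -> nat -> R) (r p : nat) (A : nat -> nat -> R) :
  real_rank m N AG r -> (p < r)%N ->
  exists (y : nat -> R) (j0 : nat), (j0 < N)%N /\
    \sum_(i < m) y i * AG i j0 != 0 /\
    forall j, (j < p)%N -> \sum_(i < m) y i * A i j = 0.
Proof.
move=> [[js [[Hnd [Hjs Hind]] Hlen]] _] Hpr.
have Hf : forall k : 'I_r, (List.nth k js 0%N < N)%N.
  move=> k; apply/ltP; apply: Hjs; apply: nth_In; rewrite Hlen; apply/ltP; exact: ltn_ord.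
pose f (k : 'I_r) : 'I_N := Ordinal (Hf k).
pose H := \matrix_(i < m, k < r) AG i (f k).
pose Am := \matrix_(i < m, j < p) A i j.
have rkH : \rank H = r.
  rewrite -mxrank_tr; apply/eqP; rewrite -[_ == _]/(row_free H^T) -kermx_eq0.
  apply/negPn/negP => Hne.
  have [i Hi] : exists i, row i (kermx H^T) != 0.
    apply/existsP; apply: contraR Hne => /existsPn Hz; apply/eqP/row_matrixP => i.
    by rewrite row0; apply/eqP; move: (Hz i); rewrite negbK.
  set v := row i (kermx H^T) in Hi.
  have Hv : v *m H^T = 0 by rewrite /v -row_mul mulmx_ker row0.
  pose a (j : nat) : R := \sum_(k < r) (if List.nth k js 0%N == j then v 0 k else 0).
  have Ha : forall k : 'I_r, a (List.nth k js 0%N) = v 0 k.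
    move=> k; rewrite /a (bigD1 k) //= eqxx big1 ?addr0 // => k' Hk'.
    case: eqP => // Heq; exfalso; move/eqP: Hk'; apply; apply: val_inj => /=.
    apply/(NoDup_nth js 0%N).1 => //; rewrite Hlen; apply/ltP; exact: ltn_ord.
  have Hz : forall j, In j js -> a j = 0.
    apply: Hind => i0 Hi0; rewrite fold_map_rsum rsum_big Hlen.
    have Hi0' : (i0 < m)%N by apply/ltP.
    apply: (@eq_trans _ _ ((v *m H^T) 0 (Ordinal Hi0'))); last by rewrite Hv mxE.
    rewrite mxE; apply: eq_bigr => k _; by rewrite Ha !mxE.
  move/eqP: Hi; apply; apply/rowP => k; rewrite -Ha Hz ?mxE //; apply: nth_In.
  rewrite Hlen; apply/ltP; exact: ltn_ord.
pose K := kermx Am.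
have [HKH|HKH] := eqVneq (K *m H) 0.
  have : (K <= kermx H)%MS by rewrite sub_kermx HKH.
  move/mxrankS; rewrite !mxrank_ker rkH.
  have := rank_leq_col Am; have := rank_leq_row H; rewrite rkH => h1 h2 h3.
  exfalso; lia.
have [i Hi] : exists i, row i (K *m H) != 0.
  apply/existsP; apply: contraR HKH => /existsPn Hz; apply/eqP/row_matrixP => i.
  by rewrite row0; apply/eqP; move: (Hz i); rewrite negbK.
set y := row i K.
have Hy : y *m Am = 0 by rewrite /y -row_mul mulmx_ker row0.
have [k Hk] : exists k, (y *m H) 0 k != 0.
  apply/existsP; apply: contraR Hi => /existsPn Hz; rewrite row_mul; apply/eqP/rowP => k.
  apply/eqP; move: (Hz k); rewrite negbK /y => /eqP ->; by rewrite mxE.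
exists (fun t => y 0 (insubd i t)), (List.nth k js 0%N); split; first exact: Hf.
split.
  move: Hk; rewrite !mxE; congr (_ != _); apply: eq_bigr => t _.
  by rewrite valKd !mxE.
move=> j Hj; apply: (@eq_trans _ _ ((y *m Am) 0 (Ordinal Hj))); last by rewrite Hy mxE.
rewrite mxE; apply: eq_bigr => t _; by rewrite valKd !mxE.
Qed.


Lemma key' (m N : nat) (AG : nat -> nat -> R) (r p : nat) (A : nat -> nat -> R) :
  real_rank m N AG r -> (p < r)%coq_nat ->
  exists (y : nat -> R) (j0 : nat), (j0 < N)%coq_nat /\
    ~ (rsum m (fun i => Rmult (y i) (AG i j0)) = IZR Z0) /\
    forall j, (j < p)%coq_nat -> rsum m (fun i => Rmult (y i) (A i j)) = IZR Z0.
Proof.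
move=> Hr /ltP Hp; have [y [j0 [H1 [H2 H3]]]] := key m N AG r p A Hr Hp.
exists y, j0; split; first exact/ltP.
split; first by rewrite rsum_big; apply/eqP.
by move=> j /ltP Hj; rewrite rsum_big; apply: H3.
Qed.
End LA.

Theorem lemma3p4
  (n : nat) (edges : list (nat * nat)) (c : nat -> R) (Q : list nat)
  (m : nat) (Sn : nat -> nat -> bool) (AG : nat -> nat -> R) (d : R) (r : nat)
  (A : nat -> nat -> R) :
  wf_network n edges c Q ->
  unique_min_cuts n edges c Q ->
  DeltaG n edges c Q d ->
  bipartition_enum Q m Sn ->
  cutset_matrix edges c Q m Sn AG ->
  real_rank m (length edges) AG r ->
  (1 <= r)%nat ->
  (forall i j, (i < m)%nat -> (j < r - 1)%nat -> A i j = 0 \/ A i j = 1) ->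
  prob_zero_uniform_box (length edges) (1 / (d * INR (length edges)))
    (fun w => in_col_span m (r - 1) A
       (fun i => rsum (length edges) (fun j => AG i j * (c j + w j)))).
Proof.
  intros _ _ _ _ _ Hrank Hr _.
  unfold prob_zero_uniform_box.
  destruct (LA.key' m (length edges) AG r (r - 1) A Hrank) as [y [j0 [Hj0 [Hu Hy]]]]; [lia|].
  set (N := length edges) in *.
  set (u := fun j => rsum m (fun i => y i * AG i j)) in *.
  apply (hyperplane_null N _ _ j0 (fun j => if Nat.eqb j j0 then 0 else u j / u j0)
           (- rsum N (fun j => u j * c j) / u j0)); auto.
  { rewrite Nat.eqb_refl. reflexivity. }
  intros w _ [x Hx].
  assert (Hsum : rsum N (fun j => u j * (c j + w j)) = 0).
  { transitivity (rsum m (fun i => y i * rsum N (fun j => AG i j * (c j + w j)))).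
    - rewrite rsum_swap. apply rsum_ext. intros j _. unfold u.
      rewrite Rmult_comm, <- rsum_scal. apply rsum_ext. intros; ring.
    - rewrite (rsum_ext m _ (fun i => y i * rsum (r - 1) (fun j => A i j * x j))).
      + rewrite rsum_swap. apply rsum_zero. intros j Hj.
        rewrite (rsum_ext m _ (fun i => x j * (y i * A i j))) by (intros; ring).
        rewrite rsum_scal. rewrite (Hy j Hj). ring.
      + intros i Hi. rewrite Hx; auto. }
  assert (Hu0 : u j0 <> 0) by exact Hu.
  rewrite (rsum_ext N _ (fun j => u j * c j + u j * w j)) in Hsum by (intros; ring).
  rewrite rsum_plus in Hsum.
  rewrite (rsum_split N j0 (fun j => u j * w j)) in Hsum by auto.
  rewrite (rsum_ext N (fun j => (if Nat.eqb j j0 then 0 else u j / u j0) * w j) (fun j => / u j0 * (if Nat.eqb j j0 then 0 else u j * w j))).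
  2:{ intros j _. destruct (Nat.eqb j j0); [ring|]. field; auto. }
  rewrite rsum_scal.
  apply (Rmult_eq_reg_l (u j0)); auto.
  replace (u j0 * (- rsum N (fun j : nat => u j * c j) / u j0 -
    / u j0 * rsum N (fun j : nat => if j =? j0 then 0 else u j * w j)))
    with (- rsum N (fun j : nat => u j * c j) - rsum N (fun j : nat => if j =? j0 then 0 else u j * w j))
    by (field; auto).
  lra.
Qed.
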